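(* Let $N\ge2$ be an integer. For all $\sigma>0$ and all $x\in[1/N,1]$, \[\Bigl|\sum_{n=0}^\infty e^{-n/\sigma}\hat F^n\varphi_0(x)-S(\sigma)\Bigr|\le\frac{N(N-1)}{2},\qquad\text{where } S(\sigma):=\frac{1}{\log N}\sum_{n=0}^\infty e^{-n/\sigma}\lambda\bigl(F^{-n}[1/N,1]\bigr).\]
   Context: $\lambda$ is Lebesgue measure; $F$ is the Farey map, $F(x)=x/(1-x)$ for $0\le x\le1/2$, $F(x)=(1-x)/x$ for $1/2<x\le1$. $\hat F$ is the transfer operator of $F$ with respect to $d\mu=dx/x$, given by $\hat Ff(x)=\dfrac{f(x/(1+x))+x\,f(1/(1+x))}{1+x}$. $\varphi_0(x):=x$. *)

(* Defs.v *)
From Stdlib Require Import Reals Lra ClassicalEpsilon.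
Open Scope R_scope.

Definition F (x : R) : R :=
  if Rle_dec x (1/2) then x / (1 - x) else (1 - x) / x.

(* Transfer operator of F w.r.t. dx/x. *)
Definition Fhat (f : R -> R) (x : R) : R :=
  (f (x / (1 + x)) + x * f (1 / (1 + x))) / (1 + x).

Definition phi0 (x : R) : R := x.

Fixpoint Fhat_iter (n : nat) (f : R -> R) : R -> R :=
  match n with
  | O => f
  | S k => Fhat (Fhat_iter k f)
  end.

Fixpoint F_iter (n : nat) (x : R) : R :=
  match n with
  | O => x
  | S k => F (F_iter k x)
  end.

Definition preimage_iter (n : nat) (a b : R) (x : R) : Prop :=
  0 <= x <= 1 /\ a <= F_iter n x <= b.

Definition cover_sum (A : R -> Prop) (s : R) : Prop :=
  exists a b : nat -> R,
    (forall k, a k <= b k) /\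
    (forall x, A x -> exists k, a k < x < b k) /\
    infinite_sum (fun k => b k - a k) s.

Definition is_glb (E : R -> Prop) (m : R) : Prop :=
  (forall s, E s -> m <= s) /\ (forall m', (forall s, E s -> m' <= s) -> m' <= m).

Definition lebesgue (A : R -> Prop) : R :=
  epsilon (inhabits 0) (fun m => is_glb (cover_sum A) m).

(* Main.v *)
Require Import Defs.
From Stdlib Require Import Reals Lra Lia List ClassicalEpsilon Classical.
From Coquelicot Require Import Coquelicot.
Open Scope R_scope.

Definition h (n : nat) : R -> R := Fhat_iter n phi0.

Lemma h_S n x : h (S n) x = (h n (x/(1+x)) + x * h n (1/(1+x))) / (1+x).
Proof. reflexivity. Qed.

Lemma psi_range x : 0 <= x <= 1 -> 0 <= x/(1+x) <= 1 /\ 0 <= 1/(1+x) <= 1.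
Proof.
  intros Hx. split; split.
  - apply Rdiv_le_0_compat; lra.
  - apply Rmult_le_reg_r with (1+x); [lra|]. unfold Rdiv; rewrite Rmult_assoc, Rinv_l; lra.
  - apply Rdiv_le_0_compat; lra.
  - apply Rmult_le_reg_r with (1+x); [lra|]. unfold Rdiv; rewrite Rmult_assoc, Rinv_l; lra.
Qed.

Lemma h_bounds n : forall x, 0 <= x <= 1 -> 0 <= h n x <= 1.
Proof.
  induction n as [|n IH]; intros x Hx.
  - unfold h, phi0; simpl; lra.
  - rewrite h_S. destruct (psi_range x Hx) as [H0 H1].
    destruct (IH _ H0) as [a1 a2]. destruct (IH _ H1) as [b1 b2].
    set (b := h n (1/(1+x))) in *. set (a := h n (x/(1+x))) in *.
    assert (0 <= x * b) by nra.
    assert (x * b <= x) by nra.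
    split.
    + apply Rdiv_le_0_compat; lra.
    + apply Rmult_le_reg_r with (1+x); [lra|]. unfold Rdiv; rewrite Rmult_assoc, Rinv_l; lra.
Qed.

Lemma incr_deriv (f f1 : R -> R) a b : a <= b ->
  (forall x, a <= x <= b -> is_derive f x (f1 x)) ->
  (forall x, a <= x <= b -> 0 <= f1 x) -> f a <= f b.
Proof.
  intros Hab Hd Hp.
  destruct (MVT_gen f a b f1) as [c [Hc Heq]].
  - intros x Hx. rewrite Rmin_left in Hx by lra. rewrite Rmax_right in Hx by lra.
    apply Hd; lra.
  - intros x Hx. rewrite Rmin_left in Hx by lra. rewrite Rmax_right in Hx by lra.
    apply continuity_pt_filterlim. apply (ex_derive_continuous (K:=R_AbsRing) (V:=R_NormedModule) f x). eexists. apply Hd; lra.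
  - rewrite Rmin_left in Hc by lra. rewrite Rmax_right in Hc by lra.
    assert (0 <= f1 c) by (apply Hp; lra). nra.
Qed.

Definition Kf (f : R -> R) (s : R) := s * f (1-s) + (1-s) * f s.

Lemma is_derive_Kf f f1 s : is_derive f (1-s) (f1 (1-s)) -> is_derive f s (f1 s) ->
  is_derive (Kf f) s (f (1-s) - s * f1 (1-s) - f s + (1-s) * f1 s).
Proof.
  intros H1 H2. unfold Kf.
  evar (l : R). replace (f (1-s) - s * f1 (1-s) - f s + (1-s) * f1 s) with l.
  - apply @is_derive_plus.
    + apply @is_derive_mult. apply @is_derive_id.
      apply (is_derive_comp f (fun t => 1 - t)). exact H1.
      apply @is_derive_minus. apply @is_derive_const. apply @is_derive_id.
      intros; apply Rmult_comm.
    + apply @is_derive_mult.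
      apply @is_derive_minus. apply @is_derive_const. apply @is_derive_id.
      exact H2. intros; apply Rmult_comm.
  - unfold l. simpl. unfold minus, plus, scal, mult, opp, one, zero; simpl.
    unfold minus, mult, plus, opp, one, zero; simpl. ring.
Qed.

Lemma is_derive_s_comp (F : R -> R) dF x : -1 < x -> is_derive F (1/(1+x)) dF ->
  is_derive (fun t => F (1/(1+t))) x (-(1/(1+x))^2 * dF).
Proof.
  intros Hx HF.
  assert (Hs : is_derive (fun t : R => 1/(1+t)) x (-(1/(1+x))^2)).
  { auto_derive. lra. field. lra. }
  pose proof (is_derive_comp F (fun t => 1/(1+t)) x dF _ HF Hs) as H.
  exact H.
Qed.

Lemma is_derive_K1 f f1 f2 s :
  is_derive f (1-s) (f1 (1-s)) -> is_derive f s (f1 s) ->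
  is_derive f1 (1-s) (f2 (1-s)) -> is_derive f1 s (f2 s) ->
  is_derive (fun s => f (1-s) - s * f1 (1-s) - f s + (1-s) * f1 s) s
    (-2*f1(1-s) + s*f2(1-s) - 2*f1 s + (1-s)*f2 s).
Proof.
  intros H1 H2 H3 H4.
  evar (l : R). replace (-2*f1(1-s) + s*f2(1-s) - 2*f1 s + (1-s)*f2 s) with l.
  - apply @is_derive_plus.
    apply @is_derive_minus. apply @is_derive_minus.
    + apply (is_derive_comp f (fun t => 1 - t)). exact H1.
      apply @is_derive_minus. apply @is_derive_const. apply @is_derive_id.
    + apply @is_derive_mult. apply @is_derive_id.
      apply (is_derive_comp f1 (fun t => 1 - t)). exact H3.
      apply @is_derive_minus. apply @is_derive_const. apply @is_derive_id.
      intros; apply Rmult_comm.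
    + exact H2.
    + apply @is_derive_mult.
      apply @is_derive_minus. apply @is_derive_const. apply @is_derive_id.
      exact H4. intros; apply Rmult_comm.
  - unfold l. unfold minus, plus, scal, mult, opp, one, zero; simpl.
    unfold minus, mult, plus, opp, one, zero; simpl. ring.
Qed.

Definition cone (f : R -> R) := exists f1 f2 : R -> R,
  (forall x, 0 < x < 2 -> is_derive f x (f1 x) /\ is_derive f1 x (f2 x)) /\
  (forall x, 0 < x <= 1 -> 0 <= f1 x /\ f2 x <= 0).

Lemma cone_Fhat f : cone f -> cone (Fhat f).
Proof.
  intros [f1 [f2 [Hd Hs]]].
  set (K1 := fun s => f (1-s) - s * f1 (1-s) - f s + (1-s) * f1 s).
  set (K2 := fun s => -2*f1(1-s) + s*f2(1-s) - 2*f1 s + (1-s)*f2 s).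
  exists (fun x => -(1/(1+x))^2 * K1 (1/(1+x))).
  exists (fun x => 2*(1/(1+x))^3*K1(1/(1+x)) + (1/(1+x))^4 * K2 (1/(1+x))).
  split.
  - intros x Hx.
    assert (Hs1 : 1/3 < 1/(1+x) < 1).
    { assert (E1 : 1/(1+x) * (1+x) = 1) by (field; lra).
      assert (0 < 1/(1+x)) by (apply Rdiv_lt_0_compat; lra). nra. }
    destruct (Hd (1/(1+x))) as [Da Db]; [lra|].
    destruct (Hd (1 - 1/(1+x))) as [Dc Dd]; [lra|].
    split.
    + apply is_derive_ext_loc with (fun t => Kf f (1/(1+t))).
      * exists (mkposreal (1+x) ltac:(lra)). intros t Ht.
        unfold ball in Ht; simpl in Ht; unfold AbsRing_ball, abs, minus, plus, opp in Ht; simpl in Ht.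
        apply Rabs_def2 in Ht. change (Kf f (1/(1+t)) = Fhat f t). unfold Kf, Fhat.
        replace (1 - 1/(1+t)) with (t/(1+t)) by (field; lra).
        field. lra.
      * apply is_derive_s_comp; [lra|]. apply is_derive_Kf; assumption.
    + evar (l : R). replace (2 * (1 / (1 + x)) ^ 3 * K1 (1 / (1 + x)) + (1 / (1 + x)) ^ 4 * K2 (1 / (1 + x))) with (- (1 / (1 + x)) ^ 2 * l).
      * change (is_derive (fun t => (fun s => -(s)^2 * K1 s) (1/(1+t))) x (- (1 / (1 + x)) ^ 2 * l)).
        apply (is_derive_s_comp (fun s => -(s)^2 * K1 s)); [lra|].
        apply @is_derive_mult.
        -- auto_derive. auto. reflexivity.
        -- unfold K1. apply (is_derive_K1 f f1 f2); [exact Dc|exact Da|exact Dd|exact Db].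
        -- intros; apply Rmult_comm.
      * unfold l. unfold minus, plus, scal, mult, opp, one, zero; simpl.
        unfold minus, mult, plus, opp, one, zero; simpl. unfold K1, K2. ring.
  - intros x Hx.
    set (s := 1/(1+x)).
    assert (Hs1 : 1/2 <= s < 1).
    { assert (E1 : s * (1+x) = 1) by (unfold s; field; lra).
      assert (0 < s) by (apply Rdiv_lt_0_compat; lra). nra. }
    assert (Hu : 0 < 1 - s <= 1/2) by lra.
    destruct (Hs s) as [p1 p2]; [lra|].
    destruct (Hs (1-s)) as [q1 q2]; [lra|].
    assert (Hf : f (1-s) <= f s).
    { apply (incr_deriv f f1 (1-s) s); [lra| |].
      - intros y Hy; apply Hd; lra.
      - intros y Hy; apply Hs; lra. }
    assert (Hf1 : f1 s <= f1 (1-s)).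
    { assert (- f1 (1-s) <= - f1 s); [|lra].
      apply (incr_deriv (fun y => - f1 y) (fun y => - f2 y) (1-s) s); [lra| |].
      - intros y Hy. apply @is_derive_opp. apply Hd; lra.
      - intros y Hy. destruct (Hs y); lra. }
    assert (HK1 : K1 s <= 0).
    { unfold K1.
      assert ((1-s) * f1 s <= (1-s) * f1 (1-s)) by (apply Rmult_le_compat_l; lra).
      assert ((1-s) * f1 (1-s) <= s * f1 (1-s)) by (apply Rmult_le_compat_r; lra).
      lra. }
    split.
    + assert (0 <= s^2) by (apply pow2_ge_0). nra.
    + unfold K1, K2 in *.
      assert (E : 2 * s ^ 3 * K1 s + s ^ 4 * K2 s = s^3 * (2*(f (1-s) - f s) - 4*s*f1 (1-s) + (2 - 4*s) * f1 s + s^2 * f2 (1-s) + s*(1-s) * f2 s)).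
      { unfold K1, K2. ring. }
      unfold K1, K2 in E. rewrite E.
      assert (0 < s^3) by (apply pow_lt; lra).
      assert (2*(f (1-s) - f s) - 4*s*f1 (1-s) + (2 - 4*s) * f1 s + s^2 * f2 (1-s) + s*(1-s) * f2 s <= 0).
      { assert (0 <= s^2) by (apply pow2_ge_0).
        assert (0 <= s * f1 (1-s)) by (apply Rmult_le_pos; lra).
        assert (0 <= (4*s-2) * f1 s) by (apply Rmult_le_pos; lra).
        assert (s^2 * f2 (1-s) <= 0) by (rewrite <- (Rmult_0_r (s^2)); apply Rmult_le_compat_l; lra).
        assert (s*(1-s) * f2 s <= 0) by (rewrite <- (Rmult_0_r (s*(1-s))); apply Rmult_le_compat_l; nra).
        lra. }
      nra.
Qed.

Lemma cone_phi0 : cone phi0.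
Proof.
  exists (fun _ => 1), (fun _ => 0). split.
  - intros x _. split; unfold phi0. apply @is_derive_id. apply @is_derive_const.
  - intros; lra.
Qed.

Lemma cone_h n : cone (h n).
Proof.
  induction n. apply cone_phi0. apply cone_Fhat. exact IHn.
Qed.

Lemma h_mono n x y : 0 < x -> x <= y -> y <= 1 -> h n x <= h n y.
Proof.
  intros Hx Hxy Hy. destruct (cone_h n) as [f1 [f2 [Hd Hs]]].
  apply (incr_deriv (h n) f1 x y Hxy).
  - intros z Hz; apply Hd; lra.
  - intros z Hz; apply Hs; lra.
Qed.

Lemma Series_zero : Series (fun _ => 0) = 0.
Proof.
  transitivity (Series (fun n => 0 * (fun _ : nat => 1) n)).
  - apply Series_ext. intros; ring.
  - rewrite Series_scal_l. ring.
Qed.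

Lemma Series_le_gen a b : ex_series a -> ex_series b -> (forall n, a n <= b n) ->
  Series a <= Series b.
Proof.
  intros Ha Hb Hab.
  assert (0 <= Series (fun n => b n - a n)).
  { rewrite <- Series_zero. apply Series_le.
    - intros n; specialize (Hab n); lra.
    - apply (ex_series_minus (K:=R_AbsRing) (V:=R_NormedModule)); assumption. }
  rewrite Series_minus in H by assumption. lra.
Qed.

Section LSec.
Variable rho : R.
Hypothesis Hrho : 0 < rho < 1.

Lemma ex_L x : 0 <= x <= 1 -> ex_series (fun n => rho^n * h n x).
Proof.
  intros Hx. apply (ex_series_le (K:=R_AbsRing) (V:=R_CompleteNormedModule)) with (fun n => rho^n).
  - intros n. unfold norm; simpl. unfold abs; simpl.
    destruct (h_bounds n x Hx). assert (0 < rho^n) by (apply pow_lt; lra).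
    rewrite Rabs_right by nra. nra.
  - apply ex_series_geom. rewrite Rabs_right; lra.
Qed.

Definition L x := Series (fun n => rho^n * h n x).

Lemma L_ge0 x : 0 <= x <= 1 -> 0 <= L x.
Proof.
  intros Hx. unfold L. rewrite <- Series_zero.
  apply Series_le; [|apply ex_L; auto].
  intros n. destruct (h_bounds n x Hx). assert (0 < rho^n) by (apply pow_lt; lra). nra.
Qed.

Lemma L_mono x y : 0 < x -> x <= y -> y <= 1 -> L x <= L y.
Proof.
  intros. unfold L. apply Series_le_gen; try (apply ex_L; lra).
  intros n. assert (0 < rho^n) by (apply pow_lt; lra).
  apply Rmult_le_compat_l; [lra|]. apply h_mono; lra.
Qed.

Lemma L_eq y : 0 <= y <= 1 ->
  L y = y + rho * (L (y/(1+y)) + y * L (1/(1+y))) / (1+y).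
Proof.
  intros Hy. destruct (psi_range y Hy) as [H0 H1].
  unfold L. rewrite Series_incr_1 by (apply ex_L; auto).
  replace (rho ^ 0 * h 0 y) with y by (unfold h, phi0; simpl; ring).
  rewrite (Series_ext _ (fun k => (rho/(1+y)) * (rho^k * h k (y/(1+y))) + (rho*y/(1+y)) * (rho^k * h k (1/(1+y))))).
  2:{ intros k. rewrite h_S. simpl. field. lra. }
  rewrite Series_plus.
  2:{ apply (ex_series_scal_l (K:=R_AbsRing) (V:=R_NormedModule)). apply ex_L; auto. }
  2:{ apply (ex_series_scal_l (K:=R_AbsRing) (V:=R_NormedModule)). apply ex_L; auto. }
  rewrite !Series_scal_l. field. lra.
Qed.

Lemma L_step (r : R) : 1 <= r ->
  L (/r) - L (/(r+1)) <= /r + (L (r/(r+1)) - L (/(r+1))) / (r+1).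
Proof.
  intros Hr.
  assert (Hy : 0 <= /r <= 1).
  { split. left; apply Rinv_0_lt_compat; lra. rewrite <- Rinv_1. apply Rinv_le_contravar; lra. }
  rewrite (L_eq (/r) Hy).
  replace (/r/(1+/r)) with (/(r+1)) by (field; lra).
  replace (1/(1+/r)) with (r/(r+1)) by (field; lra).
  assert (Ha : 0 <= /(r+1) <= 1).
  { split. left; apply Rinv_0_lt_compat; lra. rewrite <- Rinv_1. apply Rinv_le_contravar; lra. }
  assert (Hb : 0 <= r/(r+1) <= 1).
  { split. apply Rdiv_le_0_compat; lra.
    apply Rmult_le_reg_r with (r+1); [lra|]. unfold Rdiv; rewrite Rmult_assoc, Rinv_l; lra. }
  pose proof (L_ge0 _ Ha). pose proof (L_ge0 _ Hb).
  set (A := L (/(r+1))) in *. set (B := L (r/(r+1))) in *.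
  assert (Hpos : 0 <= A + B / r).
  { assert (0 <= B / r) by (apply Rdiv_le_0_compat; lra). lra. }
  assert (rho * (A + B/r) <= A + B/r) by nra.
  assert (E2 : rho * (A + /r * B) / (1 + / r) = (rho * (A + B/r)) * (r / (r+1))) by (field; lra).
  rewrite E2.
  assert (0 < r / (r+1)) by (apply Rdiv_lt_0_compat; lra).
  assert (rho * (A + B / r) * (r / (r + 1)) <= (A + B/r) * (r/(r+1))) by (apply Rmult_le_compat_r; lra).
  assert (E3 : (A + B/r) * (r/(r+1)) = A + (B - A)/(r+1)) by (field; lra).
  lra.
Qed.

Lemma D_bound m : (2 <= m)%nat -> L 1 - L (/ INR m) <= INR m * (INR m - 1) / 2.
Proof.
  induction m as [|m IH]; intros Hm; [lia|].
  assert (Hr : 1 <= INR m) by (apply (le_INR 1); lia).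
  rewrite S_INR.
  pose proof (L_step (INR m) Hr) as Hs.
  assert (Hb : 0 <= INR m / (INR m + 1) <= 1).
  { split. apply Rdiv_le_0_compat; lra.
    apply Rmult_le_reg_r with (INR m + 1); [lra|]. unfold Rdiv; rewrite Rmult_assoc, Rinv_l; lra. }
  assert (HB : L (INR m / (INR m + 1)) <= L 1).
  { apply L_mono; try lra. apply Rdiv_lt_0_compat; lra. }
  destruct (Nat.eq_dec m 1) as [->|Hm1].
  - simpl INR in *. replace (/1) with 1 in Hs by field.
    replace (1/(1+1)) with (/(1+1)) in Hs by field.
    assert (Hs' : L 1 - L (/(1+1)) <= 1) by lra.
    lra.
  - assert (H2 : (2 <= m)%nat) by lia. specialize (IH H2).
    assert (Hr2 : 2 <= INR m) by (apply (le_INR 2); lia).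
    set (r := INR m) in *.
    set (X := L 1 - L (/(r+1))).
    assert (HX : X <= r * (r-1)/2 + /r + X / (r+1)).
    { unfold X.
      assert ((L (r / (r + 1)) - L (/ (r + 1))) / (r + 1) <= (L 1 - L (/(r+1)))/(r+1)).
      { unfold Rdiv. apply Rmult_le_compat_r. left; apply Rinv_0_lt_compat; lra. lra. }
      lra. }
    assert (Hir : /r <= /2) by (apply Rinv_le_contravar; lra).
    assert (HX2 : X * r <= (r * (r-1)/2 + /r) * (r+1)).
    { assert (Hp : 0 <= r+1) by lra.
      pose proof (Rmult_le_compat_r (r+1) _ _ Hp HX) as H.
      replace ((r * (r - 1) / 2 + / r + X / (r + 1)) * (r + 1)) with ((r * (r-1)/2 + /r) * (r+1) + X) in H by (field; lra).
      nra. }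
    assert (Hir2 : /r * (r+1) <= r * (r+1) / 2 - (r-1)*(r+1)/2) .
    { assert (/r * (r+1) <= /2 * (r+1)) by (apply Rmult_le_compat_r; lra). lra. }
    assert (X * r <= (r+1) * r / 2 * r) by nra.
    apply Rmult_le_reg_r with r; [lra|]. unfold X in *. lra.
Qed.
End LSec.

Fixpoint Q (n : nat) (t : R) : R :=
  match n with
  | O => t
  | S k => Q k (t/(1+t)) - Q k (1/(1+t))
  end.

Lemma Q_deriv n : forall t, 0 < t < 2 -> is_derive (Q n) t (h n t / t).
Proof.
  induction n as [|k IH]; intros t Ht.
  - simpl. unfold h, phi0; simpl. replace (t/t) with 1 by (field; lra). apply @is_derive_id.
  - change (is_derive (fun t => Q k (t/(1+t)) - Q k (1/(1+t))) t (h (S k) t / t)).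
    assert (Hu : 0 < t/(1+t) < 2).
    { split. apply Rdiv_lt_0_compat; lra.
      apply Rmult_lt_reg_r with (1+t); [lra|]. unfold Rdiv; rewrite Rmult_assoc, Rinv_l; lra. }
    assert (Hv : 0 < 1/(1+t) < 2).
    { assert (E1 : 1/(1+t) * (1+t) = 1) by (field; lra).
      assert (0 < 1/(1+t)) by (apply Rdiv_lt_0_compat; lra). nra. }
    pose proof (IH _ Hu) as D1. pose proof (IH _ Hv) as D2.
    assert (I1 : is_derive (fun t : R => t/(1+t)) t (1/(1+t)^2)) by (auto_derive; [lra| field; lra]).
    assert (I2 : is_derive (fun t : R => 1/(1+t)) t (-(1/(1+t)^2))) by (auto_derive; [lra| field; lra]).
    pose proof (is_derive_comp (Q k) (fun t : R => t/(1+t)) t _ _ D1 I1) as C1.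
    pose proof (is_derive_comp (Q k) (fun t : R => 1/(1+t)) t _ _ D2 I2) as C2.
    pose proof (@is_derive_minus R_AbsRing R_NormedModule _ _ t _ _ C1 C2) as C.
    evar (l : R). replace (h (S k) t / t) with l; [exact C|].
    unfold l. unfold minus, plus, scal, mult, opp, one, zero; simpl.
    unfold minus, mult, plus, opp, one, zero; simpl.
    rewrite h_S. field. lra.
Qed.

Lemma Q_total n : Q n 1 - Q n 0 = 1.
Proof.
  induction n as [|k IH].
  - simpl; ring.
  - simpl. replace (0/(1+0)) with 0 by field. replace (1/(1+0)) with 1 by field. lra.
Qed.

Lemma ln_bounds_Q n a : 0 < a <= 1 ->
  h n a * (- ln a) <= Q n 1 - Q n a <= h n 1 * (- ln a).
Proof.
  intros Ha. replace (- ln a) with (ln 1 - ln a) by (rewrite ln_1; ring). split.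
  - assert (Q n a - h n a * ln a <= Q n 1 - h n a * ln 1); [|lra].
    apply (incr_deriv (fun t => Q n t - h n a * ln t) (fun t => h n t / t - h n a * / t) a 1); [lra| |].
    + intros x Hx. apply @is_derive_minus. apply Q_deriv; lra.
      apply @is_derive_scal. apply is_derive_ln. lra.
    + intros x Hx. assert (h n a <= h n x) by (apply h_mono; lra).
      unfold Rdiv. assert (0 < / x) by (apply Rinv_0_lt_compat; lra). nra.
  - assert (h n 1 * ln a - Q n a <= h n 1 * ln 1 - Q n 1); [|lra].
    apply (incr_deriv (fun t => h n 1 * ln t - Q n t) (fun t => h n 1 * / t - h n t / t) a 1); [lra| |].
    + intros x Hx. apply @is_derive_minus.
      apply @is_derive_scal. apply is_derive_ln. lra. apply Q_deriv; lra.
    + intros x Hx. assert (h n x <= h n 1) by (apply h_mono; lra).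
      unfold Rdiv. assert (0 < / x) by (apply Rinv_0_lt_compat; lra). nra.
Qed.

Fixpoint sumL (u : nat -> R) (l : list nat) : R :=
  match l with nil => 0 | k :: l' => u k + sumL u l' end.

Lemma sumL_ge0 u l : (forall k, 0 <= u k) -> 0 <= sumL u l.
Proof. intros Hu; induction l; simpl; [lra|]. specialize (Hu a); lra. Qed.

Lemma sumL_remove_le u l k : (forall k, 0 <= u k) -> sumL u (remove Nat.eq_dec k l) <= sumL u l.
Proof.
  intros Hu; induction l as [|j l IH]; simpl; [lra|].
  destruct (Nat.eq_dec k j); simpl; specialize (Hu j); lra.
Qed.

Lemma sumL_remove u l k : (forall k, 0 <= u k) -> In k l ->
  u k + sumL u (remove Nat.eq_dec k l) <= sumL u l.
Proof.
  intros Hu; induction l as [|j l IH]; simpl; [tauto|].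
  intros [->|Hin].
  - destruct (Nat.eq_dec k k); [|congruence]. pose proof (sumL_remove_le u l k Hu). lra.
  - destruct (Nat.eq_dec k j) as [->|Hne].
    + pose proof (sumL_remove_le u l j Hu). lra.
    + simpl. specialize (IH Hin). lra.
Qed.

Lemma finHB (a b : nat -> R) : (forall k, a k <= b k) ->
  forall n (ks : list nat), (length ks <= n)%nat ->
  forall l0 r0, l0 <= r0 ->
  (forall x, l0 <= x <= r0 -> exists k, In k ks /\ a k < x < b k) ->
  r0 - l0 <= sumL (fun k => b k - a k) ks.
Proof.
  intros Hab n. induction n as [|n IH]; intros ks Hlen l0 r0 Hlr Hcov.
  - destruct ks; [|simpl in Hlen; lia].
    destruct (Hcov l0) as [k [Hk _]]; [lra|]. destruct Hk.
  - destruct (Hcov l0) as [k [Hk Hk2]]; [lra|].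
    assert (Hu : forall j, 0 <= b j - a j) by (intros j; specialize (Hab j); lra).
    pose proof (sumL_remove _ ks k Hu Hk) as Hrm.
    pose proof (sumL_ge0 _ (remove Nat.eq_dec k ks) Hu).
    destruct (Rlt_le_dec r0 (b k)) as [Hlt|Hge].
    + lra.
    + assert (Hl : (length (remove Nat.eq_dec k ks) <= n)%nat).
      { pose proof (remove_length_lt Nat.eq_dec ks k Hk). lia. }
      assert (H2 : r0 - b k <= sumL (fun j => b j - a j) (remove Nat.eq_dec k ks)).
      { apply (IH _ Hl (b k) r0 Hge).
        intros x Hx. destruct (Hcov x) as [j [Hj Hj2]]; [lra|].
        exists j. split; [|lra]. apply in_in_remove; [|exact Hj].
        intros ->. lra. }
      lra.
Qed.

Lemma NoDup_remove' l k : NoDup l -> NoDup (remove Nat.eq_dec k l).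
Proof.
  induction l as [|j l IH]; intros Hnd; simpl; [constructor|].
  inversion Hnd; subst. destruct (Nat.eq_dec k j).
  - apply IH; auto.
  - constructor; [|apply IH; auto]. intros Hin. apply in_remove in Hin. tauto.
Qed.

Lemma sumL_nodup_remove u l k : (forall k, 0 <= u k) -> NoDup l ->
  sumL u l <= u k + sumL u (remove Nat.eq_dec k l).
Proof.
  intros Hu; induction l as [|j l IH]; intros Hnd; simpl.
  - specialize (Hu k); lra.
  - inversion Hnd; subst. destruct (Nat.eq_dec k j) as [->|Hne].
    + rewrite notin_remove by auto. lra.
    + simpl. specialize (IH H2). lra.
Qed.

Lemma sumL_le_partial u : (forall k, 0 <= u k) -> forall N l, NoDup l ->
  (forall k, In k l -> (k <= N)%nat) -> sumL u l <= sum_f_R0 u N.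
Proof.
  intros Hu N. induction N as [|N IH]; intros l Hnd Hle.
  - pose proof (sumL_nodup_remove u l 0 Hu Hnd).
    assert (E : remove Nat.eq_dec 0%nat l = nil).
    { destruct (remove Nat.eq_dec 0%nat l) as [|j r] eqn:E; auto.
      assert (Hj : In j (remove Nat.eq_dec 0%nat l)) by (rewrite E; left; auto).
      apply in_remove in Hj. destruct Hj as [Hj Hj2]. specialize (Hle j Hj). lia. }
    rewrite E in H. simpl in *. lra.
  - pose proof (sumL_nodup_remove u l (S N) Hu Hnd).
    simpl. assert (sumL u (remove Nat.eq_dec (S N) l) <= sum_f_R0 u N).
    { apply IH. apply NoDup_remove'; auto.
      intros k Hk. apply in_remove in Hk. destruct Hk as [Hk Hk2]. specialize (Hle k Hk). lia. }
    lra.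
Qed.

Lemma sum_f_R0_mono u : (forall k, 0 <= u k) -> forall N M, (N <= M)%nat -> sum_f_R0 u N <= sum_f_R0 u M.
Proof.
  intros Hu N M H. induction H; [lra|]. simpl. specialize (Hu (S m)). lra.
Qed.

Lemma isum_ge_partial u s : (forall k, 0 <= u k) -> infinite_sum u s ->
  forall N, sum_f_R0 u N <= s.
Proof.
  intros Hu Hs N. destruct (Rle_lt_dec (sum_f_R0 u N) s) as [|Hlt]; [auto|].
  destruct (Hs (sum_f_R0 u N - s)) as [M HM]; [lra|].
  specialize (HM (max N M) (Nat.le_max_r _ _)).
  pose proof (sum_f_R0_mono u Hu N (max N M) (Nat.le_max_l _ _)).
  unfold R_dist in HM. apply Rabs_def2 in HM. lra.
Qed.

Lemma isum_ge0 u s : (forall k, 0 <= u k) -> infinite_sum u s -> 0 <= s.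
Proof.
  intros Hu Hs. pose proof (isum_ge_partial u s Hu Hs 0). simpl in H. specialize (Hu 0%nat). lra.
Qed.

Lemma ks_of_list (l : list R) : exists ks : list nat, forall k, In (INR k) l -> In k ks.
Proof.
  induction l as [|r l [ks IH]].
  - exists nil. simpl. tauto.
  - destruct (classic (exists k, r = INR k)) as [[k0 Hk0]|Hn].
    + exists (k0 :: ks). intros k [Hk|Hk].
      * left. apply INR_eq. congruence.
      * right; auto.
    + exists ks. intros k [Hk|Hk]; [|auto]. exfalso; apply Hn; exists k; auto.
Qed.

Lemma HB (a b : nat -> R) s : (forall k, a k <= b k) ->
  (forall x, 0 <= x <= 1 -> exists k, a k < x < b k) ->
  infinite_sum (fun k => b k - a k) s -> 1 <= s.
Proof.
  intros Hab Hcov Hs.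
  set (fam := mkfamily (fun r => exists k, r = INR k)
                (fun r y => exists k, r = INR k /\ a k < y < b k)
                (ltac:(intros r [y [k [e _]]]; exists k; exact e))).
  destruct (compact_P3 0 1 fam) as [D [HD Hfin]].
  - split.
    + intros x Hx. destruct (Hcov x Hx) as [k Hk]. exists (INR k). simpl. exists k. auto.
    + intros r y [k [-> Hk]].
      assert (Hd : 0 < Rmin (y - a k) (b k - y)) by (apply Rmin_pos; lra).
      exists (mkposreal _ Hd). intros z Hz. unfold disc in Hz; simpl in Hz.
      exists k. split; auto. apply Rabs_def2 in Hz.
      pose proof (Rmin_l (y - a k) (b k - y)). pose proof (Rmin_r (y - a k) (b k - y)). lra.
  - destruct Hfin as [l Hl].
    destruct (ks_of_list l) as [ks Hks].
    set (ks' := nodup Nat.eq_dec ks).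
    assert (H1 : 1 - 0 <= sumL (fun k => b k - a k) ks').
    { apply (finHB a b Hab (length ks') ks' (le_n _) 0 1); [lra|].
      intros x Hx. destruct (HD x Hx) as [r [[k [Er Hk]] HDr]].
      exists k. split; auto. unfold ks'. apply nodup_In. apply Hks.
      rewrite <- Er. apply Hl. split; auto. exists k; auto. }
    assert (Hu : forall k, 0 <= b k - a k) by (intros k; specialize (Hab k); lra).
    assert (H2 : sumL (fun k => b k - a k) ks' <= sum_f_R0 (fun k => b k - a k) (list_max ks')).
    { apply sumL_le_partial; auto. apply NoDup_nodup.
      intros k Hk. pose proof (proj1 (list_max_le ks' (list_max ks')) (le_n _)) as HF.
      rewrite Forall_forall in HF. apply HF; auto. }
    pose proof (isum_ge_partial _ s Hu Hs (list_max ks')). lra.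
Qed.

Fixpoint lenL (l : list (R*R)) : R :=
  match l with nil => 0 | p :: l' => (snd p - fst p) + lenL l' end.

Definition lcov (l : list (R*R)) (A : R -> Prop) :=
  (forall p, In p l -> fst p <= snd p) /\
  (forall x, A x -> exists p, In p l /\ fst p < x < snd p).

Lemma cover_sub A B s : cover_sum A s -> (forall x, B x -> A x) -> cover_sum B s.
Proof.
  intros [a [b [H1 [H2 H3]]]] HBA. exists a, b. repeat split; auto.
Qed.

Lemma cover_prepend1 A s a0 b0 : cover_sum A s -> a0 <= b0 ->
  cover_sum (fun x => A x \/ (a0 < x < b0)) (s + (b0 - a0)).
Proof.
  intros [a [b [H1 [H2 H3]]]] Hab.
  exists (fun n => match n with O => a0 | S k => a k end).
  exists (fun n => match n with O => b0 | S k => b k end).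
  split; [|split].
  - intros [|k]; auto.
  - intros x [Hx|Hx].
    + destruct (H2 x Hx) as [k Hk]. exists (S k); auto.
    + exists O; auto.
  - apply is_series_Reals. apply is_series_decr_1.
    apply is_series_Reals in H3.
    match goal with |- is_series _ ?l => replace l with s; [exact H3|] end.
    unfold plus, opp; simpl. ring.
Qed.

Lemma cover_list A s l B : cover_sum A s -> lcov l B ->
  cover_sum (fun x => A x \/ B x) (s + lenL l).
Proof.
  revert B. induction l as [|p l IH]; intros B HA [Hl1 Hl2].
  - simpl. replace (s + 0) with s by ring. apply (cover_sub A); auto.
    intros x [Hx|Hx]; auto. destruct (Hl2 x Hx) as [p [[] _]].
  - set (B' := fun x => exists q, In q l /\ fst q < x < snd q).
    assert (H' : lcov l B').
    { split. intros q Hq; apply Hl1; right; auto. intros x Hx; exact Hx. }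
    pose proof (cover_prepend1 _ _ (fst p) (snd p) (IH B' HA H') (Hl1 p (or_introl eq_refl))) as HC.
    replace (s + lenL (p :: l)) with (s + lenL l + (snd p - fst p)) by (simpl; ring).
    apply (cover_sub _ _ _ HC). intros x [Hx|Hx]; [left; left; auto|].
    destruct (Hl2 x Hx) as [q [[<-|Hq] Hq2]].
    + right; auto.
    + left; right. exists q; auto.
Qed.

Lemma cover_zero : cover_sum (fun _ => False) 0.
Proof.
  exists (fun _ => 0), (fun _ => 0). split; [intros; lra|]. split; [intros x []|].
  intros eps Heps. exists O. intros n _. unfold R_dist.
  replace (sum_f_R0 (fun _ : nat => 0 - 0) n) with 0.
  - rewrite Rminus_0_r, Rabs_R0; auto.
  - induction n; simpl; [ring|]. rewrite <- IHn; ring.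
Qed.

Lemma lcov_cover l A : lcov l A -> cover_sum A (lenL l).
Proof.
  intros H. pose proof (cover_list _ _ l A cover_zero H) as HC.
  replace (lenL l) with (0 + lenL l) by ring. apply (cover_sub _ _ _ HC). auto.
Qed.

Lemma cover_ge0 A s : cover_sum A s -> 0 <= s.
Proof.
  intros [a [b [H1 [H2 H3]]]]. apply (isum_ge0 (fun k => b k - a k) s); auto. intros k; specialize (H1 k); lra.
Qed.

Lemma leb_spec A : (exists s, cover_sum A s) -> is_glb (cover_sum A) (lebesgue A).
Proof.
  intros Hne. unfold lebesgue. apply epsilon_spec.
  destruct (completeness (fun y => cover_sum A (-y))) as [m [Hm1 Hm2]].
  - exists 0. intros y Hy. apply cover_ge0 in Hy. lra.
  - destruct Hne as [s Hs]. exists (-s). rewrite Ropp_involutive. auto.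
  - exists (-m). split.
    + intros s Hs. assert (-s <= m); [|lra]. apply Hm1. rewrite Ropp_involutive; auto.
    + intros m' Hm'. assert (m <= - m'); [|lra]. apply Hm2. intros y Hy. specialize (Hm' _ Hy). lra.
Qed.

Lemma leb_le_lcov A m : (forall eps, 0 < eps -> exists l, lcov l A /\ lenL l <= m + eps) ->
  lebesgue A <= m.
Proof.
  intros H. destruct (H 1) as [l0 [Hl0 _]]; [lra|].
  pose proof (leb_spec A (ex_intro _ _ (lcov_cover _ _ Hl0))) as [G1 G2].
  apply Rle_plus_epsilon. intros eps Heps. destruct (H eps Heps) as [l [Hl Hle]].
  specialize (G1 _ (lcov_cover _ _ Hl)). lra.
Qed.

Lemma leb_ge A m : (exists s, cover_sum A s) -> (forall s, cover_sum A s -> m <= s) ->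
  m <= lebesgue A.
Proof.
  intros Hne H. destruct (leb_spec A Hne) as [G1 G2]. apply G2; auto.
Qed.

Lemma lcov_app l1 l2 A B C : lcov l1 A -> lcov l2 B -> (forall x, C x -> A x \/ B x) ->
  lcov (l1 ++ l2) C.
Proof.
  intros [H1 H2] [H3 H4] HC. split.
  - intros p Hp. apply in_app_or in Hp. destruct Hp; auto.
  - intros x Hx. destruct (HC x Hx) as [Ha|Hb].
    + destruct (H2 x Ha) as [p [Hp Hp2]]. exists p. split; auto. apply in_or_app; auto.
    + destruct (H4 x Hb) as [p [Hp Hp2]]. exists p. split; auto. apply in_or_app; auto.
Qed.

Lemma lenL_app l1 l2 : lenL (l1 ++ l2) = lenL l1 + lenL l2.
Proof. induction l1; simpl; [ring|]. rewrite IHl1; ring. Qed.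

Lemma F_range y : 0 <= y <= 1 -> 0 <= F y <= 1.
Proof.
  intros Hy. unfold F. destruct (Rle_dec y (1/2)).
  - assert (E : y / (1-y) * (1-y) = y) by (field; lra).
    assert (0 <= y/(1-y)) by (apply Rdiv_le_0_compat; lra). nra.
  - assert (E : (1-y) / y * y = 1 - y) by (field; lra).
    assert (0 <= (1-y)/y) by (apply Rdiv_le_0_compat; lra). nra.
Qed.

Lemma F_iter_range n x : 0 <= x <= 1 -> 0 <= F_iter n x <= 1.
Proof. intros Hx; induction n; simpl; auto. apply F_range; auto. Qed.

Lemma F_pre y c d : 0 <= y <= 1 -> 0 <= c -> c <= F y <= d ->
  (c/(1+c) <= y <= d/(1+d)) \/ (1/(1+d) <= y <= 1/(1+c)).
Proof.
  intros Hy Hc HF. assert (Hd : 0 <= d) by lra.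
  assert (Ec : c/(1+c) * (1+c) = c) by (field; lra).
  assert (Ed : d/(1+d) * (1+d) = d) by (field; lra).
  assert (Ec' : 1/(1+c) * (1+c) = 1) by (field; lra).
  assert (Ed' : 1/(1+d) * (1+d) = 1) by (field; lra).
  unfold F in HF. destruct (Rle_dec y (1/2)).
  - left. assert (E : y / (1-y) * (1-y) = y) by (field; lra).
    set (q := y/(1-y)) in *. set (r1 := c/(1+c)) in *. set (r2 := d/(1+d)) in *.
    assert (c * (1-y) <= y) by nra. assert (y <= d * (1-y)) by nra.
    split; nra.
  - right. assert (E : (1-y) / y * y = 1-y) by (field; lra).
    set (q := (1-y)/y) in *. set (r1 := 1/(1+c)) in *. set (r2 := 1/(1+d)) in *.
    assert (c * y <= 1 - y) by nra. assert (1 - y <= d * y) by nra.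
    split; nra.
Qed.

Lemma pre_step n c d x : 0 <= c -> preimage_iter (S n) c d x ->
  preimage_iter n (c/(1+c)) (d/(1+d)) x \/ preimage_iter n (1/(1+d)) (1/(1+c)) x.
Proof.
  intros Hc [Hx HF]. simpl in HF.
  destruct (F_pre _ c d (F_iter_range n x Hx) Hc HF) as [H|H].
  - left; split; auto.
  - right; split; auto.
Qed.

Lemma psi0_mono c d : 0 <= c <= d -> 0 <= c/(1+c) <= d/(1+d) /\ d/(1+d) <= 1.
Proof.
  intros H. split; [split|].
  - apply Rdiv_le_0_compat; lra.
  - assert (0 <= d/(1+d) - c/(1+c)); [|lra].
    replace (d/(1+d) - c/(1+c)) with ((d-c)/((1+c)*(1+d))) by (field; lra).
    apply Rdiv_le_0_compat; nra.
  - assert (0 <= 1 - d/(1+d)); [|lra].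
    replace (1 - d/(1+d)) with (1/(1+d)) by (field; lra). apply Rdiv_le_0_compat; lra.
Qed.

Lemma psi1_mono c d : 0 <= c <= d -> 0 <= 1/(1+d) <= 1/(1+c) /\ 1/(1+c) <= 1.
Proof.
  intros H. split; [split|].
  - apply Rdiv_le_0_compat; lra.
  - assert (0 <= 1/(1+c) - 1/(1+d)); [|lra].
    replace (1/(1+c) - 1/(1+d)) with ((d-c)/((1+c)*(1+d))) by (field; lra).
    apply Rdiv_le_0_compat; nra.
  - assert (0 <= 1 - 1/(1+c)); [|lra].
    replace (1 - 1/(1+c)) with (c/(1+c)) by (field; lra). apply Rdiv_le_0_compat; lra.
Qed.

Lemma lcov_E n : forall c d, 0 <= c <= d -> d <= 1 -> forall eps, 0 < eps ->
  exists l, lcov l (preimage_iter n c d) /\ lenL l <= Q n d - Q n c + eps.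
Proof.
  induction n as [|n IH]; intros c d Hcd Hd1 eps Heps.
  - exists ((c - eps/2, d + eps/2) :: nil). split.
    + split.
      * intros p [<-|[]]. simpl. lra.
      * intros x [Hx [H1 H2]]. exists (c - eps/2, d + eps/2). split; [left; auto|]. simpl. simpl in H1, H2. lra.
    + simpl. lra.
  - destruct (psi0_mono c d Hcd) as [P0 P0'].
    destruct (psi1_mono c d Hcd) as [P1 P1'].
    destruct (IH _ _ P0 P0' (eps/2)) as [l1 [Hl1 Hlen1]]; [lra|].
    destruct (IH _ _ P1 P1' (eps/2)) as [l2 [Hl2 Hlen2]]; [lra|].
    exists (l1 ++ l2). split.
    + apply (lcov_app _ _ _ _ _ Hl1 Hl2). intros x Hx. apply pre_step; auto. lra.
    + rewrite lenL_app. simpl. lra.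
Qed.

Lemma HB_cover C s : cover_sum C s -> (forall x, 0 <= x <= 1 -> C x) -> 1 <= s.
Proof.
  intros [a [b [H1 [H2 H3]]]] HC. apply (HB a b s H1); auto.
Qed.

Lemma leb_E n a b : 0 <= a <= b -> b <= 1 ->
  lebesgue (preimage_iter n a b) = Q n b - Q n a.
Proof.
  intros Hab Hb1. apply Rle_antisym.
  - apply leb_le_lcov. intros eps Heps. apply lcov_E; auto.
  - destruct (lcov_E n a b Hab Hb1 1) as [l0 [Hl0 _]]; [lra|].
    apply leb_ge; [exists (lenL l0); apply lcov_cover; auto|].
    intros s Hs. apply Rle_plus_epsilon. intros eps Heps.
    destruct (lcov_E n 0 a ltac:(lra) ltac:(lra) (eps/2)) as [l1 [Hl1 Hlen1]]; [lra|].
    destruct (lcov_E n b 1 ltac:(lra) ltac:(lra) (eps/2)) as [l2 [Hl2 Hlen2]]; [lra|].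
    pose proof (cover_list _ _ _ _ (cover_list _ _ _ _ Hs Hl1) Hl2) as HC.
    pose proof (HB_cover _ _ HC) as H1.
    assert (1 <= s + lenL l1 + lenL l2).
    { apply H1. intros x Hx. pose proof (F_iter_range n x Hx) as Hy.
      destruct (Rlt_le_dec (F_iter n x) a).
      - left; right. split; auto. lra.
      - destruct (Rle_lt_dec (F_iter n x) b).
        + left; left. split; auto.
        + right. split; auto. lra. }
    pose proof (Q_total n). lra.
Qed.

Lemma exp_pow_n sigma n : 0 < sigma -> exp (- INR n / sigma) = (exp (-1/sigma)) ^ n.
Proof.
  intros Hs. induction n as [|n IH].
  - simpl. replace (-0/sigma) with 0 by (field; lra). apply exp_0.
  - rewrite S_INR. replace (- (INR n + 1) / sigma) with (- INR n / sigma + (-1/sigma)) by (field; lra).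
    rewrite exp_plus, IH. simpl. ring.
Qed.

Theorem lemma2 (N : nat) (HN : (2 <= N)%nat) (sigma : R) (Hsigma : 0 < sigma)
  (x : R) (Hx : / INR N <= x <= 1) :
  exists L S : R,
    infinite_sum (fun n => exp (- INR n / sigma) * Fhat_iter n phi0 x) L /\
    infinite_sum (fun n => exp (- INR n / sigma) *
                   lebesgue (preimage_iter n (/ INR N) 1)) S /\
    Rabs (L - S / ln (INR N)) <= INR N * (INR N - 1) / 2.
Proof.
  set (rho := exp (-1/sigma)).
  assert (Hrho : 0 < rho < 1).
  { split. apply exp_pos. rewrite <- exp_0. apply exp_increasing.
    assert (0 < 1/sigma) by (apply Rdiv_lt_0_compat; lra). lra. }
  assert (HN2 : 2 <= INR N) by (apply (le_INR 2); auto).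
  assert (Hx01 : 0 <= x <= 1).
  { split; [|lra]. assert (0 < / INR N) by (apply Rinv_0_lt_compat; lra). lra. }
  set (a := / INR N) in *.
  assert (Ha : 0 < a <= 1/2).
  { split. apply Rinv_0_lt_compat; lra. unfold a. replace (1/2) with (/2) by field.
    apply Rinv_le_contravar; lra. }
  assert (HlnN : 0 < ln (INR N)). { rewrite <- ln_1. apply ln_increasing; lra. }
  assert (Hlna : - ln a = ln (INR N)). { unfold a. rewrite ln_Rinv; lra. }
  exists (L rho x).
  set (u := fun n => rho ^ n * (Q n 1 - Q n a)).
  assert (Hub : forall n, 0 <= u n <= rho ^ n * ln (INR N)).
  { intros n. unfold u. pose proof (ln_bounds_Q n a ltac:(lra)) as [B1 B2].
    rewrite Hlna in B1, B2.
    destruct (h_bounds n a ltac:(lra)). destruct (h_bounds n 1 ltac:(lra)).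
    assert (0 < rho^n) by (apply pow_lt; lra).
    assert (0 <= h n a * ln (INR N)) by (apply Rmult_le_pos; lra).
    assert (h n 1 * ln (INR N) <= ln (INR N)) by nra.
    split; [apply Rmult_le_pos; lra|]. apply Rmult_le_compat_l; lra. }
  assert (Hexu : ex_series u).
  { apply (ex_series_le (K:=R_AbsRing) (V:=R_CompleteNormedModule)) with (fun n => rho^n * ln (INR N)).
    - intros n. unfold norm; simpl. unfold abs; simpl. destruct (Hub n).
      rewrite Rabs_right by lra. lra.
    - apply ex_series_scal_r. apply ex_series_geom. rewrite Rabs_right; lra. }
  exists (Series u).
  split; [|split].
  - apply is_series_Reals. apply is_series_ext with (fun n => rho ^ n * h n x).
    + intros n. unfold rho. rewrite exp_pow_n; auto.
    + apply Series_correct. apply ex_L; auto.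
  - apply is_series_Reals. apply is_series_ext with u.
    + intros n. unfold u, rho. rewrite exp_pow_n by auto. rewrite leb_E; auto; lra.
    + apply Series_correct; auto.
  - assert (HL1 : L rho a <= L rho x) by (apply L_mono; auto; lra).
    assert (HL2 : L rho x <= L rho 1) by (apply L_mono; auto; lra).
    assert (HD : L rho 1 - L rho a <= INR N * (INR N - 1) / 2) by (apply D_bound; auto).
    assert (HS1 : L rho a * ln (INR N) <= Series u).
    { unfold L. rewrite <- Series_scal_r. apply Series_le_gen.
      - apply ex_series_scal_r. apply ex_L; auto; lra.
      - auto.
      - intros n. unfold u. pose proof (ln_bounds_Q n a ltac:(lra)) as [B1 B2].
        rewrite Hlna in B1. assert (0 < rho^n) by (apply pow_lt; lra). nra. }
    assert (HS2 : Series u <= L rho 1 * ln (INR N)).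
    { unfold L. rewrite <- Series_scal_r. apply Series_le_gen.
      - auto.
      - apply ex_series_scal_r. apply ex_L; auto; lra.
      - intros n. unfold u. pose proof (ln_bounds_Q n a ltac:(lra)) as [B1 B2].
        rewrite Hlna in B2. assert (0 < rho^n) by (apply pow_lt; lra). nra. }
    assert (E1 : L rho a <= Series u / ln (INR N)).
    { apply Rmult_le_reg_r with (ln (INR N)); auto. unfold Rdiv. rewrite Rmult_assoc, Rinv_l; lra. }
    assert (E2 : Series u / ln (INR N) <= L rho 1).
    { apply Rmult_le_reg_r with (ln (INR N)); auto. unfold Rdiv. rewrite Rmult_assoc, Rinv_l; lra. }
    unfold Fhat_iter. apply Rabs_le. split; lra.
Qed.
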